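(* Let $H$ be a finite-dimensional complex Hilbert space, $A$ a unital (real or complex) $*$-subalgebra of $\mathrm{End}_{\mathbb{C}}(H)$, $D$ a selfadjoint operator on $H$, and $J$ an antilinear isometry of $H$ with $J^2=\varepsilon 1$, $JD=\varepsilon' DJ$ for some $\varepsilon,\varepsilon'\in\{\pm1\}$, such that $[a,JbJ^{-1}]=0$ for all $a,b\in A$. With $D_1,D_2,D_R$ as defined in the context, $D$ satisfies the first order condition $[[D,a],JbJ^{-1}]=0$ for all $a,b\in A$ if and only if: $D_2=0$, $D_1$ commutes with every element of $A$, and $D_R$ satisfies the first order condition, i.e. $[[D_R,a],JbJ^{-1}]=0$ for all $a,b\in A$.
   Context: Let $A_{\mathbb{C}}$ be the complex $*$-subalgebra of $\mathrm{End}_{\mathbb{C}}(H)$ generated by $A$; write $A_{\mathbb{C}}\cong\bigoplus_{i=1}^N M_{n_i}(\mathbb{C})$ and let $P_1,\dots,P_N$ be the (orthogonal projections representing the) units of the summands, so $\sum_iP_i=1$. Set $Q_j=JP_jJ^{-1}$ and $D_{ij,kl}=P_iQ_jDP_kQ_l$. Define $D_0=\sum_{i,j,k:\,i\neq k}D_{ij,kj}$, $D_1=\sum_{i,j,l:\,j\neq l}D_{ij,il}$, $D_2=\sum_{i,j,k,l:\,i\neq k,\,j\neq l}D_{ij,kl}$, $D_R=\sum_{i,j}D_{ij,ij}$, so $D=D_0+D_1+D_2+D_R$. *)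

(* Defs.v *)
From HB Require Import structures.
From mathcomp Require Import all_boot all_order all_algebra complex.
From mathcomp Require Import reals.
Set Implicit Arguments. Unset Strict Implicit. Unset Printing Implicit Defensive.
Import Order.TTheory GRing.Theory Num.Theory.
Local Open Scope ring_scope.

(* H = C^n (column vectors) with the standard inner product <u,v> = u^* v,
   C = R[i] the complex numbers over a real field R : realType. *)

Section Defs.
Variable R : realType.
Local Notation C := (R[i]).

Definition adj m n (M : 'M[C]_(m, n)) : 'M[C]_(n, m) := (map_mx Num.conj M)^T.

Definition comm n (X Y : 'M[C]_n) : 'M[C]_n := X *m Y - Y *m X.

Definition inner n (u v : 'cV[C]_n) : C := (adj u *m v) 0 0.

Definition antilinear_isometry n (J : 'cV[C]_n -> 'cV[C]_n) : Prop :=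
  (forall u v, J (u + v) = J u + J v) /\
  (forall (c : C) v, J (c *: v) = Num.conj c *: J v) /\
  (forall v, inner (J v) (J v) = inner v v).

Definition mx_of n (f : 'cV[C]_n -> 'cV[C]_n) : 'M[C]_n :=
  \matrix_(i, j) f (delta_mx j 0) i 0.

Definition Jconj n (J Jinv : 'cV[C]_n -> 'cV[C]_n) (M : 'M[C]_n) : 'M[C]_n :=
  mx_of (fun v => J (M *m Jinv v)).

(* A is a unital real *-subalgebra of End_C(H) (a complex *-subalgebra is in
   particular a real one) *)
Definition unital_real_star_subalgebra n (A : 'M[C]_n -> Prop) : Prop :=
  A 1%:M /\ A 0 /\
  (forall a b, A a -> A b -> A (a + b)) /\
  (forall a b, A a -> A b -> A (a *m b)) /\
  (forall (c : C) a, c \is Num.real -> A a -> A (c *: a)) /\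
  (forall a, A a -> A (adj a)).

Definition unital_complex_star_subalgebra n (S : 'M[C]_n -> Prop) : Prop :=
  S 1%:M /\ S 0 /\
  (forall a b, S a -> S b -> S (a + b)) /\
  (forall a b, S a -> S b -> S (a *m b)) /\
  (forall (c : C) a, S a -> S (c *: a)) /\
  (forall a, S a -> S (adj a)).

Definition complexification n (A : 'M[C]_n -> Prop) (M : 'M[C]_n) : Prop :=
  forall S : 'M[C]_n -> Prop, unital_complex_star_subalgebra S ->
    (forall a, A a -> S a) -> S M.

(* P_1..P_N are the units of the simple summands of A_C = (+)_i M_{n_i}(C):
   nonzero orthogonal projections in the center of A_C, mutually orthogonal,
   summing to 1, and each summand P_i A_C has trivial center (hence is a full
   matrix algebra). *)
Definition summand_units n (A : 'M[C]_n -> Prop) N (P : 'I_N -> 'M[C]_n) : Prop :=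
  (forall i, complexification A (P i)) /\
  (forall i, adj (P i) = P i) /\
  (forall i j, P i *m P j = if i == j then P i else 0) /\
  (forall i, P i != 0) /\
  (\sum_(i < N) P i = 1%:M) /\
  (forall i x, complexification A x -> P i *m x = x *m P i) /\
  (forall i z, complexification A z ->
     (forall x, complexification A x -> z *m x = x *m z) ->
     exists c : C, P i *m z = c *: P i).

Definition Dblock n N (P : 'I_N -> 'M[C]_n) (J Jinv : 'cV[C]_n -> 'cV[C]_n)
  (D : 'M[C]_n) (i j k l : 'I_N) : 'M[C]_n :=
  P i *m Jconj J Jinv (P j) *m D *m P k *m Jconj J Jinv (P l).

Definition D_1 n N P J Jinv D : 'M[C]_n :=
  \sum_(i < N) \sum_(j < N) \sum_(l < N | j != l) @Dblock n N P J Jinv D i j i l.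

Definition D_2 n N P J Jinv D : 'M[C]_n :=
  \sum_(i < N) \sum_(j < N) \sum_(k < N | i != k) \sum_(l < N | j != l)
     @Dblock n N P J Jinv D i j k l.

Definition D_R n N P J Jinv D : 'M[C]_n :=
  \sum_(i < N) \sum_(j < N) @Dblock n N P J Jinv D i j i j.

Definition first_order n (A : 'M[C]_n -> Prop) (J Jinv : 'cV[C]_n -> 'cV[C]_n)
  (X : 'M[C]_n) : Prop :=
  forall a b, A a -> A b -> comm (comm X a) (Jconj J Jinv b) = 0.

End Defs.

(* Main.v *)
Require Import Defs.
From HB Require Import structures.
From mathcomp Require Import all_boot all_order all_algebra complex.
From mathcomp Require Import reals.
Import Order.TTheory GRing.Theory Num.Theory.
Set Implicit Arguments. Unset Strict Implicit. Unset Printing Implicit Defensive.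
Local Open Scope ring_scope.

Lemma mx_ext (R : realType) n (X Y : 'M[R[i]]_n) :
  (forall v : 'cV[R[i]]_n, X *m v = Y *m v) -> X = Y.
Proof.
move=> H; apply/matrixP => i j.
have := congr1 (fun M : 'cV[R[i]]_n => M i 0) (H (delta_mx j 0)).
by rewrite -!colE !mxE.
Qed.

Lemma mx_ofE (R : realType) n (f : 'cV[R[i]]_n -> 'cV[R[i]]_n) :
  (forall u v, f (u + v) = f u + f v) ->
  (forall (c : R[i]) v, f (c *: v) = c *: f v) ->
  forall v, mx_of f *m v = f v.
Proof.
move=> fD fZ v.
have f0 : f 0 = 0 by have := fZ 0 0; rewrite !scale0r.
have fS : forall (I : Type) (r : seq I) (P : pred I) F,
    f (\sum_(i <- r | P i) F i) = \sum_(i <- r | P i) f (F i).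
  by move=> I r P F; apply: (big_morph f fD f0).
rewrite {2}(matrix_sum_delta v) fS; apply/matrixP => i k.
rewrite (ord1 k) !mxE summxE; apply: eq_bigr => j _.
by rewrite fS big_ord1 fZ !mxE mulrC.
Qed.


Definition Jprops (R : realType) n (J Jinv : 'cV[R[i]]_n -> 'cV[R[i]]_n) :=
  [/\ forall u v, J (u + v) = J u + J v,
      forall (c : R[i]) v, J (c *: v) = Num.conj c *: J v,
      forall v, J (Jinv v) = v & forall v, Jinv (J v) = v].

Lemma JconjE (R : realType) n (J Jinv : 'cV[R[i]]_n -> 'cV[R[i]]_n) M v :
  Jprops J Jinv -> Jconj J Jinv M *m v = J (M *m Jinv v).
Proof.
case=> JD JZ JJi JiJ.
have JiD u w : Jinv (u + w) = Jinv u + Jinv w.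
  by rewrite -{1}(JJi u) -{1}(JJi w) -JD JiJ.
have JiZ (c : R[i]) w : Jinv (c *: w) = Num.conj c *: Jinv w.
  by rewrite -{1}(JJi w) -{1}(conjCK c) -JZ JiJ.
apply: mx_ofE => [u w|c w]; first by rewrite JiD mulmxDr JD.
by rewrite JiZ -scalemxAr JZ conjCK.
Qed.


Lemma JconjD (R : realType) n (J Jinv : 'cV[R[i]]_n -> 'cV[R[i]]_n) X Y :
  Jprops J Jinv -> Jconj J Jinv (X + Y) = Jconj J Jinv X + Jconj J Jinv Y.
Proof.
move=> HJ; have [JD _ _ _] := HJ; apply: mx_ext => v.
by rewrite mulmxDl !JconjE // mulmxDl JD.
Qed.

Lemma JconjZ (R : realType) n (J Jinv : 'cV[R[i]]_n -> 'cV[R[i]]_n) c X :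
  Jprops J Jinv -> Jconj J Jinv (c *: X) = Num.conj c *: Jconj J Jinv X.
Proof.
move=> HJ; have [_ JZ _ _] := HJ; apply: mx_ext => v.
by rewrite -!scalemxAl !JconjE // -scalemxAl JZ.
Qed.

Lemma JconjM (R : realType) n (J Jinv : 'cV[R[i]]_n -> 'cV[R[i]]_n) X Y :
  Jprops J Jinv -> Jconj J Jinv (X *m Y) = Jconj J Jinv X *m Jconj J Jinv Y.
Proof.
move=> HJ; have [_ _ _ JiJ] := HJ; apply: mx_ext => v.
by rewrite -mulmxA !JconjE // -mulmxA JiJ.
Qed.

Lemma Jconj1 (R : realType) n (J Jinv : 'cV[R[i]]_n -> 'cV[R[i]]_n) :
  Jprops J Jinv -> Jconj J Jinv 1%:M = 1%:M.
Proof.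
move=> HJ; have [_ _ JJi _] := HJ; apply: mx_ext => v.
by rewrite JconjE // !mul1mx JJi.
Qed.

Lemma Jconj0 (R : realType) n (J Jinv : 'cV[R[i]]_n -> 'cV[R[i]]_n) :
  Jprops J Jinv -> Jconj J Jinv 0 = 0.
Proof. by move=> HJ; rewrite -(scale0r 0) JconjZ // conjC0 !scale0r. Qed.

Lemma Jconj_sum (R : realType) n (J Jinv : 'cV[R[i]]_n -> 'cV[R[i]]_n)
  (I : Type) (r : seq I) (P : pred I) F :
  Jprops J Jinv -> Jconj J Jinv (\sum_(i <- r | P i) F i) =
                   \sum_(i <- r | P i) Jconj J Jinv (F i).
Proof.
move=> HJ; apply: (big_morph (Jconj J Jinv) (fun X Y => JconjD X Y HJ) (Jconj0 HJ)).
Qed.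

Lemma JconjK (R : realType) n (J Jinv : 'cV[R[i]]_n -> 'cV[R[i]]_n) (eps : R[i]) X :
  Jprops J Jinv -> eps * eps = 1 -> (forall v, J (J v) = eps *: v) ->
  Jconj J Jinv (Jconj J Jinv X) = X.
Proof.
move=> HJ e2 JJ; have [_ JZ JJi JiJ] := HJ.
have JiJi v : Jinv (Jinv v) = eps *: v.
  have := JJ (Jinv (Jinv v)); rewrite !JJi => E.
  by rewrite [in RHS]E scalerA e2 scale1r.
apply: mx_ext => v; rewrite !JconjE // JiJi -scalemxAr JJ.
by rewrite scalemxAl -scalemxAl scalerA e2 scale1r.
Qed.

Lemma JconjDeps (R : realType) n (J Jinv : 'cV[R[i]]_n -> 'cV[R[i]]_n) (eps' : R[i]) D :
  Jprops J Jinv -> (forall v, J (D *m v) = eps' *: (D *m J v)) ->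
  Jconj J Jinv D = eps' *: D.
Proof.
move=> HJ JDe; have [_ _ JJi _] := HJ.
by apply: mx_ext => v; rewrite JconjE // JDe JJi scalemxAl.
Qed.

Lemma commDl (R : realType) n (X Y Z : 'M[R[i]]_n) : comm (X + Y) Z = comm X Z + comm Y Z.
Proof. by rewrite /comm mulmxDl mulmxDr opprD addrACA. Qed.
Lemma commDr (R : realType) n (X Y Z : 'M[R[i]]_n) : comm Z (X + Y) = comm Z X + comm Z Y.
Proof. by rewrite /comm mulmxDl mulmxDr opprD addrACA. Qed.
Lemma commZl (R : realType) n c (X Z : 'M[R[i]]_n) : comm (c *: X) Z = c *: comm X Z.
Proof. by rewrite /comm -scalemxAl -scalemxAr scalerBr. Qed.
Lemma commZr (R : realType) n c (X Z : 'M[R[i]]_n) : comm Z (c *: X) = c *: comm Z X.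
Proof. by rewrite /comm -scalemxAl -scalemxAr scalerBr. Qed.
Lemma comm0l (R : realType) n (Z : 'M[R[i]]_n) : comm 0 Z = 0.
Proof. by rewrite /comm mul0mx mulmx0 subr0. Qed.
Lemma comm0r (R : realType) n (Z : 'M[R[i]]_n) : comm Z 0 = 0.
Proof. by rewrite /comm mul0mx mulmx0 subr0. Qed.

Lemma adjD (R : realType) n (X Y : 'M[R[i]]_n) : adj (X + Y) = adj X + adj Y.
Proof. by apply/matrixP => i j; rewrite !mxE rmorphD. Qed.
Lemma adjZ (R : realType) n c (X : 'M[R[i]]_n) : adj (c *: X) = Num.conj c *: adj X.
Proof. by apply/matrixP => i j; rewrite !mxE rmorphM. Qed.

Definition CC (R : realType) n (A : 'M[R[i]]_n -> Prop) (x : 'M[R[i]]_n) :=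
  exists a1 a2, [/\ A a1, A a2 & x = a1 + 'i *: a2].

Lemma complexif_span (R : realType) n (A : 'M[R[i]]_n -> Prop) :
  unital_real_star_subalgebra A -> forall x, complexification A x -> CC A x.
Proof.
move=> [A1 [A0 [AD [AM [AZ Aadj]]]]] x; apply; last first.
  by move=> a Aa; exists a, 0; split => //; rewrite scaler0 addr0.
have AN a : A a -> A (- a).
  by move=> Aa; rewrite -scaleN1r; apply: AZ => //; rewrite rpredN rpred1.
split; [|split; [|split; [|split; [|split]]]].
- by exists 1%:M, 0; split => //; rewrite scaler0 addr0.
- by exists 0, 0; split => //; rewrite scaler0 addr0.
- move=> _ _ [a1 [a2 [Ha1 Ha2 ->]]] [b1 [b2 [Hb1 Hb2 ->]]].
  exists (a1 + b1), (a2 + b2); split; [exact: AD | exact: AD|].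
  by rewrite scalerDr addrACA.
- move=> _ _ [a1 [a2 [Ha1 Ha2 ->]]] [b1 [b2 [Hb1 Hb2 ->]]].
  exists (a1 *m b1 - a2 *m b2), (a1 *m b2 + a2 *m b1); split.
  + by apply: AD; [exact: AM | apply: AN; exact: AM].
  + by apply: AD; exact: AM.
  rewrite mulmxDl !mulmxDr -!scalemxAl -!scalemxAr scalerA mulCii scaleN1r.
  by rewrite scalerDr -!addrA; congr (_ + _); rewrite addrA addrC.
- move=> c _ [a1 [a2 [Ha1 Ha2 ->]]].
  exists ('Re c *: a1 - 'Im c *: a2), ('Im c *: a1 + 'Re c *: a2); split.
  + by apply: AD; [exact: AZ (Creal_Re c) Ha1 | apply: AN; exact: AZ (Creal_Im c) Ha2].
  + by apply: AD; [exact: AZ (Creal_Im c) Ha1 | exact: AZ (Creal_Re c) Ha2].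
  rewrite {1}(Crect c) scalerDr !scalerDl !scalerA scalerDr !scalerA.
  rewrite (mulrAC 'i) mulCii mulN1r scaleNr (mulrC ('Re c)) -!addrA.
  by congr (_ + _); rewrite addrA addrC.
- move=> _ [a1 [a2 [Ha1 Ha2 ->]]].
  exists (adj a1), (- adj a2); split; [exact: Aadj | apply: AN; exact: Aadj|].
  by rewrite adjD adjZ conjCi scaleNr scalerN.
Qed.

Lemma ext_bilin (R : realType) n (A : 'M[R[i]]_n -> Prop) J Jinv
  (F : 'M[R[i]]_n -> 'M[R[i]]_n -> 'M[R[i]]_n) :
  unital_real_star_subalgebra A -> Jprops J Jinv ->
  (forall x y z, F (x + y) z = F x z + F y z) ->
  (forall x y z, F z (x + y) = F z x + F z y) ->
  (forall c x z, F (c *: x) z = c *: F x z) ->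
  (forall c x z, F z (c *: x) = c *: F z x) ->
  (forall a b, A a -> A b -> F a (Jconj J Jinv b) = 0) ->
  forall a b, complexification A a -> complexification A b ->
    F a (Jconj J Jinv b) = 0.
Proof.
move=> HA HJ FDl FDr FZl FZr H a b /(complexif_span HA) [a1 [a2 [Ha1 Ha2 ->]]]
  /(complexif_span HA) [b1 [b2 [Hb1 Hb2 ->]]].
rewrite JconjD // JconjZ // FDl !FDr !FZl !FZr !H //.
by rewrite !scaler0 !addr0.
Qed.

Lemma block_gen1 (M : zmodType) (mul : M -> M -> M)
  (mulA : associative mul)
  (mulBl : forall x y z, mul (x - y) z = mul x z - mul y z)
  (mulBr : forall x y z, mul z (x - y) = mul z x - mul z y)
  (mul0l : forall x, mul 0 x = 0) (mul0r : forall x, mul x 0 = 0)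
  (Pi Pk Qj Ql D : M) :
  mul Pi Pk = 0 -> mul Qj Ql = 0 -> mul Pk Pk = Pk -> mul Ql Ql = Ql ->
  mul Qj Pk = mul Pk Qj -> mul Ql Pk = mul Pk Ql ->
  mul (mul (mul (mul Pi Qj) D) Pk) Ql =
  mul (mul (mul (mul Pi Qj)
     (mul (mul D Pk - mul Pk D) Ql - mul Ql (mul D Pk - mul Pk D))) Pk) Ql.
Proof.
move=> PiPk QjQl PkPk QlQl QjPk QlPk.
have e1 X : mul (mul X Ql) Pk = mul (mul X Pk) Ql by rewrite -!mulA QlPk.
have e2 X : mul (mul X Qj) Pk = mul (mul X Pk) Qj by rewrite -!mulA QjPk.
have e3 X : mul (mul X Pk) Pk = mul X Pk by rewrite -!mulA PkPk.
have e4 X : mul (mul X Ql) Ql = mul X Ql by rewrite -!mulA QlQl.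
have e5 X : mul (mul X Qj) Ql = 0 by rewrite -!mulA QjQl !mul0r.
rewrite !(mulBl, mulBr) !mulA ?e1 ?e2 ?e3 ?e4 ?e5 ?PiPk ?mul0l ?mul0r.
by rewrite ?subr0 ?sub0r ?oppr0 ?addr0.
Qed.

Lemma block_gen2 (M : zmodType) (mul : M -> M -> M)
  (mulA : associative mul)
  (mulBl : forall x y z, mul (x - y) z = mul x z - mul y z)
  (mulBr : forall x y z, mul z (x - y) = mul z x - mul z y)
  (mul0l : forall x, mul 0 x = 0) (mul0r : forall x, mul x 0 = 0)
  (Pi Qj Ql D a : M) :
  mul Qj Ql = 0 -> mul Pi Pi = Pi -> mul Ql Ql = Ql -> mul Ql Pi = mul Pi Ql ->
  mul a Pi = mul Pi a -> mul a Qj = mul Qj a -> mul a Ql = mul Ql a ->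
  mul (mul (mul (mul (mul Pi Qj) D) Pi) Ql) a -
  mul a (mul (mul (mul (mul Pi Qj) D) Pi) Ql) =
  mul (mul (mul (mul Pi Qj)
     (mul (mul D a - mul a D) Ql - mul Ql (mul D a - mul a D))) Pi) Ql.
Proof.
move=> QjQl PiPi QlQl QlPi aPi aQj aQl.
have e1 X : mul (mul X Ql) Pi = mul (mul X Pi) Ql by rewrite -!mulA QlPi.
have e2 X : mul (mul X a) Pi = mul (mul X Pi) a by rewrite -!mulA aPi.
have e3 X : mul (mul X a) Qj = mul (mul X Qj) a by rewrite -!mulA aQj.
have e3' X : mul (mul X a) Ql = mul (mul X Ql) a by rewrite -!mulA aQl.
have e4 X : mul (mul X Ql) Ql = mul X Ql by rewrite -!mulA QlQl.
have e5 X : mul (mul X Qj) Ql = 0 by rewrite -!mulA QjQl !mul0r.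
have e6 X : mul (mul X Pi) Pi = mul X Pi by rewrite -!mulA PiPi.
rewrite !(mulBl, mulBr) !mulA aPi ?e1 ?e2 ?e3 ?e3' ?e4 ?e5 ?e6 ?mul0l ?mul0r.
by rewrite ?subr0 ?sub0r ?oppr0 ?addr0.
Qed.

Lemma block_id1 (R : realType) n (Pi Pk Qj Ql D : 'M[R[i]]_n) :
  Pi *m Pk = 0 -> Qj *m Ql = 0 -> Pk *m Pk = Pk -> Ql *m Ql = Ql ->
  Qj *m Pk = Pk *m Qj -> Ql *m Pk = Pk *m Ql ->
  Pi *m Qj *m D *m Pk *m Ql = Pi *m Qj *m comm (comm D Pk) Ql *m Pk *m Ql.
Proof.
exact: (@block_gen1 _ (@mulmx _ n n n) (@mulmxA _ n n n n)
  (fun x y z => mulmxBl x y z) (fun x y z => mulmxBr z x y)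
  (fun x => mul0mx n x) (fun x => mulmx0 n x)).
Qed.

Lemma block_id2 (R : realType) n (Pi Qj Ql D a : 'M[R[i]]_n) :
  Qj *m Ql = 0 -> Pi *m Pi = Pi -> Ql *m Ql = Ql -> Ql *m Pi = Pi *m Ql ->
  a *m Pi = Pi *m a -> a *m Qj = Qj *m a -> a *m Ql = Ql *m a ->
  comm (Pi *m Qj *m D *m Pi *m Ql) a = Pi *m Qj *m comm (comm D a) Ql *m Pi *m Ql.
Proof.
exact: (@block_gen2 _ (@mulmx _ n n n) (@mulmxA _ n n n n)
  (fun x y z => mulmxBl x y z) (fun x y z => mulmxBr z x y)
  (fun x => mul0mx n x) (fun x => mulmx0 n x)).
Qed.
Lemma split4 (V : zmodType) N (F : 'I_N -> 'I_N -> V) i j :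
  \sum_(k < N) \sum_(l < N) F k l =
  F i j + \sum_(k < N | i != k) F k j + \sum_(l < N | j != l) F i l
  + \sum_(k < N | i != k) \sum_(l < N | j != l) F k l.
Proof.
have E (G : 'I_N -> V) a : \sum_(k < N | k != a) G k = \sum_(k < N | a != k) G k.
  by apply: eq_bigl => k; rewrite eq_sym.
rewrite (bigD1 i) //= [\sum_(l < N) F i l](bigD1 j) //= E E.
have -> : \sum_(k < N | i != k) \sum_(l < N) F k l =
  \sum_(k < N | i != k) F k j + \sum_(k < N | i != k) \sum_(l < N | j != l) F k l.
  by rewrite -big_split; apply: eq_bigr => k _; rewrite (bigD1 j) //= E.
by rewrite addrACA !addrA.
Qed.

Lemma jacobi_gen (M : zmodType) (mul : M -> M -> M)
  (mulA : associative mul)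
  (mulBl : forall x y z, mul (x - y) z = mul x z - mul y z)
  (mulBr : forall x y z, mul z (x - y) = mul z x - mul z y)
  (X a c : M) :
  mul a c = mul c a -> mul X c = mul c X ->
  mul (mul X a - mul a X) c - mul c (mul X a - mul a X) = 0.
Proof.
move=> ac Xc; rewrite mulBl mulBr.
rewrite -!mulA ac !mulA Xc -(mulA a) Xc !mulA ac.
by rewrite subrr.
Qed.

Lemma jacobi0 (R : realType) n (X a c : 'M[R[i]]_n) :
  comm a c = 0 -> comm X c = 0 -> comm (comm X a) c = 0.
Proof.
move=> /subr0_eq ac /subr0_eq Xc.
exact: (@jacobi_gen _ (@mulmx _ n n n) (@mulmxA _ n n n n)
  (fun x y z => mulmxBl x y z) (fun x y z => mulmxBr z x y) X a c ac Xc).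
Qed.

Lemma FO_add (R : realType) n (X Y a c : 'M[R[i]]_n) :
  comm (comm (X + Y) a) c = comm (comm X a) c + comm (comm Y a) c.
Proof. by rewrite commDl commDl. Qed.

Lemma JconjN (R : realType) n (J Jinv : 'cV[R[i]]_n -> 'cV[R[i]]_n) X :
  Jprops J Jinv -> Jconj J Jinv (- X) = - Jconj J Jinv X.
Proof. by move=> HJ; rewrite -scaleN1r JconjZ // rmorphN1 scaleN1r. Qed.

Unset Implicit Arguments.

Theorem proposition6 (R : realType) (n : nat)
  (A : 'M[R[i]]_n -> Prop) (D : 'M[R[i]]_n)
  (J Jinv : 'cV[R[i]]_n -> 'cV[R[i]]_n) (eps eps' : R[i])
  (N : nat) (P : 'I_N -> 'M[R[i]]_n) :
  unital_real_star_subalgebra A ->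
  adj D = D ->
  antilinear_isometry J ->
  (forall v, J (Jinv v) = v) -> (forall v, Jinv (J v) = v) ->
  (eps = 1 \/ eps = -1) -> (eps' = 1 \/ eps' = -1) ->
  (forall v, J (J v) = eps *: v) ->
  (forall v, J (D *m v) = eps' *: (D *m J v)) ->
  (forall a b, A a -> A b -> comm a (Jconj J Jinv b) = 0) ->
  summand_units A P ->
  (first_order A J Jinv D <->
     [/\ D_2 P J Jinv D = 0,
         (forall a, A a -> comm (D_1 P J Jinv D) a = 0)
       & first_order A J Jinv (D_R P J Jinv D)]).
Proof.
move=> HA HDsa HJiso JJi JiJ heps heps' JJ JDe Hcomm HP.
have [JD [JZ _]] := HJiso.
have HJ : Jprops J Jinv by split.
have [PAC [_ [PP [_ [Psum [Pcomm _]]]]]] := HP.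
have AinAC a : A a -> complexification A a by move=> Aa S _ HS; exact: HS.
have commAC : forall a b, complexification A a -> complexification A b ->
    comm a (Jconj J Jinv b) = 0.
  exact: (ext_bilin HA HJ (@commDl R n) (@commDr R n) (@commZl R n) (@commZr R n) Hcomm).
have FOext : first_order A J Jinv D -> forall a b, complexification A a ->
    complexification A b -> comm (comm D a) (Jconj J Jinv b) = 0.
  move=> HFO; apply: (ext_bilin (F := fun x y => comm (comm D x) y) HA HJ) => //.
  - by move=> x y z; rewrite commDr commDl.
  - by move=> x y z; rewrite commDr.
  - by move=> c x z; rewrite commZr commZl.
  - by move=> c x z; rewrite commZr.
have PPi i : P i *m P i = P i by rewrite PP eqxx.
have PPik i k : i != k -> P i *m P k = 0 by move=> /negbTE ne; rewrite PP ne.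
have QQi i : Jconj J Jinv (P i) *m Jconj J Jinv (P i) = Jconj J Jinv (P i).
  by rewrite -JconjM // PPi.
have QQik i k : i != k -> Jconj J Jinv (P i) *m Jconj J Jinv (P k) = 0.
  by move=> ne; rewrite -JconjM // PPik // Jconj0.
have Qsum : \sum_(j < N) Jconj J Jinv (P j) = 1%:M.
  by rewrite -Jconj_sum // Psum Jconj1.
have PQ i j : P i *m Jconj J Jinv (P j) = Jconj J Jinv (P j) *m P i.
  by apply/subr0_eq; exact: commAC (PAC i) (PAC j).
have aP a i : A a -> a *m P i = P i *m a.
  by move=> Aa; rewrite (Pcomm i a (AinAC a Aa)).
have aQ a j : A a -> a *m Jconj J Jinv (P j) = Jconj J Jinv (P j) *m a.
  by move=> Aa; apply/subr0_eq; exact: commAC (AinAC _ Aa) (PAC j).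
pose D0 := \sum_(i < N) \sum_(j < N) \sum_(k < N | i != k) Dblock P J Jinv D i j k j.
have Dfull : D = \sum_(i < N) \sum_(j < N) \sum_(k < N) \sum_(l < N)
                   Dblock P J Jinv D i j k l.
  symmetry.
  transitivity (\sum_(i < N) \sum_(j < N) \sum_(k < N)
                  P i *m Jconj J Jinv (P j) *m D *m P k).
    apply: eq_bigr => i _; apply: eq_bigr => j _; apply: eq_bigr => k _.
    by rewrite /Dblock -mulmx_sumr Qsum mulmx1.
  transitivity (\sum_(i < N) \sum_(j < N) P i *m Jconj J Jinv (P j) *m D).
    apply: eq_bigr => i _; apply: eq_bigr => j _.
    by rewrite -mulmx_sumr Psum mulmx1.
  transitivity (\sum_(i < N) P i *m D).
    by apply: eq_bigr => i _; rewrite -mulmx_suml -mulmx_sumr Qsum mulmx1.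
  by rewrite -mulmx_suml Psum mul1mx.
have Hdec : D = D_R P J Jinv D + D0 + D_1 P J Jinv D + D_2 P J Jinv D.
  rewrite [LHS]Dfull /D_R /D_1 /D_2 /D0 -!big_split; apply: eq_bigr => i _.
  rewrite -!big_split; apply: eq_bigr => j _.
  exact: (split4 (fun k l => Dblock P J Jinv D i j k l) i j).
have D2zero : first_order A J Jinv D -> D_2 P J Jinv D = 0.
  move=> HFO; rewrite /D_2; apply: big1 => i _; apply: big1 => j _.
  apply: big1 => k ik; apply: big1 => l jl.
  rewrite /Dblock (block_id1 _ (PPik i k ik) (QQik j l jl) (PPi k) (QQi l)
    (esym (PQ k j)) (esym (PQ k l))).
  by rewrite (FOext HFO _ _ (PAC k) (PAC l)) mulmx0 !mul0mx.
have D1comm : first_order A J Jinv D ->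
    forall a, A a -> comm (D_1 P J Jinv D) a = 0.
  move=> HFO a Aa; rewrite /D_1.
  have Hind (I : finType) (Pr : pred I) (F : I -> 'M[R[i]]_n) :
      (forall x, Pr x -> comm (F x) a = 0) -> comm (\sum_(x | Pr x) F x) a = 0.
    move=> HF; apply: (big_ind (fun X => comm X a = 0)); [exact: comm0l| |exact: HF].
    by move=> x y hx hy; rewrite commDl hx hy addr0.
  apply: (Hind) => i _; apply: (Hind) => j _; apply: (Hind) => l jl.
  rewrite /Dblock (block_id2 _ (QQik j l jl) (PPi i) (QQi l) (esym (PQ i l))
    (aP a i Aa) (aQ a j Aa) (aQ a l Aa)).
  by rewrite (FOext HFO _ _ (AinAC _ Aa) (PAC l)) mulmx0 !mul0mx.
have e2 : eps * eps = 1 by case: heps => ->; rewrite ?mulr1 ?mulrNN ?mulr1.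
have e2' : eps' * eps' = 1 by case: heps' => ->; rewrite ?mulr1 ?mulrNN ?mulr1.
have JK X : Jconj J Jinv (Jconj J Jinv X) = X by exact: JconjK HJ e2 JJ.
have JB i j k l : Jconj J Jinv (Dblock P J Jinv D i j k l) =
    eps' *: Dblock P J Jinv D j i l k.
  rewrite /Dblock !JconjM // !JK (JconjDeps HJ JDe) -(PQ j i).
  rewrite -scalemxAr -!scalemxAl; congr (eps' *: _).
  by rewrite -!mulmxA -(PQ l k).
have JD1 : Jconj J Jinv (D_1 P J Jinv D) = eps' *: D0.
  rewrite /D_1 /D0 [in RHS]exchange_big /=.
  rewrite Jconj_sum // scaler_sumr; apply: eq_bigr => i _.
  rewrite Jconj_sum // scaler_sumr; apply: eq_bigr => j _.
  rewrite Jconj_sum // scaler_sumr; apply: eq_bigr => l _.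
  exact: JB.
have D0comm : (forall a, A a -> comm (D_1 P J Jinv D) a = 0) ->
    forall b, A b -> comm D0 (Jconj J Jinv b) = 0.
  move=> H1 b Ab.
  have := congr1 (Jconj J Jinv) (H1 b Ab).
  rewrite /comm JconjD // JconjN // !JconjM // JD1 Jconj0 //.
  rewrite -scalemxAl -scalemxAr -scalerBr => H.
  by rewrite -[LHS]scale1r -e2' -scalerA H scaler0.
have FO1 : (forall a, A a -> comm (D_1 P J Jinv D) a = 0) ->
    forall a b, A a -> A b ->
    comm (comm (D_1 P J Jinv D) a) (Jconj J Jinv b) = 0.
  by move=> H1 a b Aa Ab; rewrite H1 // comm0l.
have FO0 : (forall a, A a -> comm (D_1 P J Jinv D) a = 0) ->
    forall a b, A a -> A b -> comm (comm D0 a) (Jconj J Jinv b) = 0.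
  by move=> H1 a b Aa Ab; apply: jacobi0; [exact: Hcomm | exact: D0comm].
split.
- move=> HFO; have D2 := D2zero HFO; have D1c := D1comm HFO.
  split => // a b Aa Ab.
  have := HFO a b Aa Ab.
  rewrite {1}Hdec D2 addr0 !FO_add (FO0 D1c) // (FO1 D1c) // !addr0.
  done.
- case=> D2 D1c FOR a b Aa Ab.
  rewrite Hdec D2 addr0 !FO_add FOR // (FO0 D1c) // (FO1 D1c) // !addr0.
  done.
Qed.
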